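(* Let $f : M^* \to \mathbb{R}^3$ be a trivalent polyhedral surface with nonvanishing edge lengths, with the three face normals at every vertex linearly independent and adjacent faces satisfying $n_l \neq \pm n_r$. For $t \in (-\epsilon,\epsilon)$ let $f_t$ be the polyhedral surface obtained by offsetting every face in parallel by the same distance $t$ in the direction of its normal, i.e. with the same face normals $n$ and heights $h_\phi + t$. Then for every face $\phi \in F^*$, \[ H_\phi = \frac12 \frac{d}{dt}\mathrm{Area}(f_t(\phi))\Big|_{t=0}. \]
   Context: Let $M=(V,E,F)$ be a cellular decomposition of an oriented surface without boundary (each face having finitely many edges), and $M^*=(V^*,E^*,F^* )$ its dual decomposition; faces of $M^*$ correspond bijectively to vertices of $M$. A polyhedral surface is a map $f : V^* \to \mathbb{R}^3$ such that the vertices of each face $\phi \in F^*$ are coplanar (faces may self-intersect). It is trivalent if every vertex of $M^*$ has degree 3. For each face $\phi$, $n_\phi \in \mathbb{S}^2$ is its unit normal (compatible with the orientation) and $h_\phi = \langle f_i, n_\phi\rangle$ for any vertex $i$ of $\phi$ is its height; the vertices of a trivalent surface are determined by $(n,h)$ as intersections of three face planes. For an oriented edge from $i$ to $j$, the left face $l$ is the face whose positively oriented boundary traverses $i \to j$, and the right face $r$ is the other face containing the edge. The edge length is $\ell_{ij} = \|f_j - f_i\|$ and the dihedral angle $\alpha_{ij} \in (-\pi,\pi)$ is defined by $\cos\alpha_{ij} = \langle n_l, n_r\rangle$ and $\sin\alpha_{ij} = \langle n_l \times n_r, (f_j - f_i)/\|f_j-f_i\|\rangle$. The integrated mean curvature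 of a face is $H_\phi = \frac12\sum_{ij\in\partial\phi}\ell_{ij}\tan\frac{\alpha_{ij}}{2}$. The signed area of a face $\phi$ with boundary vertices $i_1,\dots,i_m$ in positive cyclic order is $\mathrm{Area}(f(\phi)) = \frac12\sum_{s=1}^m \langle f_{i_s}\times f_{i_{s+1}}, n_\phi\rangle$ (indices mod $m$). *)

(* Defs.v *)
From Stdlib Require Import Reals Lra List.
From Coquelicot Require Import Coquelicot.
Import ListNotations.
Open Scope R_scope.

Definition vec : Type := (R * R * R)%type.

Definition vadd (u v : vec) : vec :=
  let '(u1, u2, u3) := u in let '(v1, v2, v3) := v in (u1 + v1, u2 + v2, u3 + v3).
Definition vscal (a : R) (u : vec) : vec :=
  let '(u1, u2, u3) := u in (a * u1, a * u2, a * u3).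
Definition vopp (u : vec) : vec := vscal (-1) u.
Definition vsub (u v : vec) : vec := vadd u (vopp v).
Definition vzero : vec := (0, 0, 0).
Definition dot (u v : vec) : R :=
  let '(u1, u2, u3) := u in let '(v1, v2, v3) := v in u1 * v1 + u2 * v2 + u3 * v3.
Definition cross (u v : vec) : vec :=
  let '(u1, u2, u3) := u in let '(v1, v2, v3) := v in
  (u2 * v3 - u3 * v2, u3 * v1 - u1 * v3, u1 * v2 - u2 * v1).
Definition vnorm (u : vec) : R := sqrt (dot u u).

Definition lin_indep3 (a b c : vec) : Prop :=
  forall l1 l2 l3 : R,
    vadd (vscal l1 a) (vadd (vscal l2 b) (vscal l3 c)) = vzero ->
    l1 = 0 /\ l2 = 0 /\ l3 = 0.

(* Oriented boundary edges of a face whose boundary vertices, in positive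
   cyclic order, are the list s = [i1; ...; im]: (i1,i2), ..., (im,i1). *)
Definition cyc_edges {V : Type} (s : list V) : list (V * V) :=
  match s with
  | [] => []
  | x :: t => combine s (t ++ [x])
  end.

Definition sumR {A : Type} (g : A -> R) (l : list A) : R :=
  fold_right Rplus 0 (map g l).

(* The combinatorics of M^*: every oriented edge i->j of a face phi lies on the
   boundary of no other face in that orientation (phi is its left face), and it
   is traversed in the opposite direction j->i by some face r (its right face):
   an oriented surface without boundary. *)
Definition closed_oriented {V F : Type} (bd : F -> list V) : Prop :=
  forall (phi : F) (i j : V), In (i, j) (cyc_edges (bd phi)) ->
    (forall psi : F, In (i, j) (cyc_edges (bd psi)) -> psi = phi) /\
    (exists r : F, In (j, i) (cyc_edges (bd r))).

(* Dihedral angle alpha of the oriented edge from fi to fj with left face normal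
   nl and right face normal nr. *)
Definition dihedral_angle (nl nr fi fj : vec) (alpha : R) : Prop :=
  - PI < alpha < PI /\
  cos alpha = dot nl nr /\
  sin alpha = dot (cross nl nr) (vscal (/ vnorm (vsub fj fi)) (vsub fj fi)).

Definition face_area {V : Type} (p : V -> vec) (nrm : vec) (s : list V) : R :=
  / 2 * sumR (fun e : V * V => dot (cross (p (fst e)) (p (snd e))) nrm) (cyc_edges s).

Definition mean_curv {V : Type} (p : V -> vec) (alpha : V -> V -> R) (s : list V) : R :=
  / 2 * sumR (fun e : V * V =>
                vnorm (vsub (p (snd e)) (p (fst e))) * tan (alpha (fst e) (snd e) / 2))
             (cyc_edges s).

(* Main.v *)
Require Import Defs.
From Stdlib Require Import Reals List Lra Lia.
From Coquelicot Require Import Coquelicot.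
Import ListNotations.
Open Scope R_scope.

Lemma dot_vadd x y z : dot (vadd x y) z = dot x z + dot y z.
Proof. destruct x as [[? ?] ?], y as [[? ?] ?], z as [[? ?] ?]; simpl; ring. Qed.
Lemma dot_vscal a x z : dot (vscal a x) z = a * dot x z.
Proof. destruct x as [[? ?] ?], z as [[? ?] ?]; simpl; ring. Qed.
Lemma dot_vsub x y z : dot (vsub x y) z = dot x z - dot y z.
Proof. destruct x as [[? ?] ?], y as [[? ?] ?], z as [[? ?] ?]; simpl; ring. Qed.
Lemma dot_self_nonneg x : 0 <= dot x x.
Proof. destruct x as [[a b] c]; simpl; nra. Qed.
Lemma unit_dot x : vnorm x = 1 -> dot x x = 1.
Proof. unfold vnorm; intro H. rewrite <- (sqrt_sqrt (dot x x)) by apply dot_self_nonneg.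
  rewrite H; ring. Qed.

Definition det3 (a b c : vec) : R := dot a (cross b c).

Lemma lin_indep_det a b c : lin_indep3 a b c -> det3 a b c <> 0.
Proof.
  intros HL Hd. unfold det3 in Hd.
  destruct a as [[a1 a2] a3], b as [[b1 b2] b3], c as [[c1 c2] c3].
  simpl in Hd.
  set (p1 := b2 * c3 - b3 * c2). set (p2 := b3 * c1 - b1 * c3). set (p3 := b1 * c2 - b2 * c1).
  destruct (Req_dec (p1*p1+p2*p2+p3*p3) 0) as [H0|H0].
  - assert (E1 : p1 = 0) by nra. assert (E2 : p2 = 0) by nra. assert (E3 : p3 = 0) by nra.
    destruct (HL 0 (-(b1*c1+b2*c2+b3*c3)) (b1*b1+b2*b2+b3*b3)) as [_ [_ H3]].
    { simpl. unfold vzero. f_equal; [f_equal|].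
      + replace (0 * a1 + (- (b1 * c1 + b2 * c2 + b3 * c3) * b1 + (b1 * b1 + b2 * b2 + b3 * b3) * c1))
          with (- (b2 * p3 - b3 * p2)) by (unfold p2, p3; ring). rewrite E2, E3; ring.
      + replace (0 * a2 + (- (b1 * c1 + b2 * c2 + b3 * c3) * b2 + (b1 * b1 + b2 * b2 + b3 * b3) * c2))
          with (- (b3 * p1 - b1 * p3)) by (unfold p1, p3; ring). rewrite E1, E3; ring.
      + replace (0 * a3 + (- (b1 * c1 + b2 * c2 + b3 * c3) * b3 + (b1 * b1 + b2 * b2 + b3 * b3) * c3))
          with (- (b1 * p2 - b2 * p1)) by (unfold p1, p2; ring). rewrite E1, E2; ring. }
    assert (B1 : b1 = 0) by nra. assert (B2 : b2 = 0) by nra. assert (B3 : b3 = 0) by nra.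
    destruct (HL 0 1 0) as [_ [H4 _]].
    { simpl. unfold vzero. subst. f_equal; [f_equal|]; ring. }
    lra.
  - destruct (HL (p1*p1+p2*p2+p3*p3)
                 (a1*(p2*c3 - p3*c2) + a2*(p3*c1 - p1*c3) + a3*(p1*c2-p2*c1))
                 (a1*(b2*p3 - b3*p2) + a2*(b3*p1 - b1*p3) + a3*(b1*p2-b2*p1))) as [H1 _].
    { simpl. unfold vzero.
      set (D := a1 * (b2 * c3 - b3 * c2) + a2 * (b3 * c1 - b1 * c3) + a3 * (b1 * c2 - b2 * c1)) in Hd.
      f_equal; [f_equal|].
      + transitivity (D * p1); [unfold D, p1, p2, p3; ring | rewrite Hd; ring].
      + transitivity (D * p2); [unfold D, p1, p2, p3; ring | rewrite Hd; ring].
      + transitivity (D * p3); [unfold D, p1, p2, p3; ring | rewrite Hd; ring]. }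
    contradiction.
Qed.

Lemma uniq3 a b c x y : det3 a b c <> 0 ->
  dot x a = dot y a -> dot x b = dot y b -> dot x c = dot y c -> x = y.
Proof.
  unfold det3. intros Hd Ha Hb Hc.
  destruct a as [[a1 a2] a3], b as [[b1 b2] b3], c as [[c1 c2] c3],
    x as [[x1 x2] x3], y as [[y1 y2] y3].
  simpl in *.
  set (D := a1 * (b2 * c3 - b3 * c2) + a2 * (b3 * c1 - b1 * c3) + a3 * (b1 * c2 - b2 * c1)) in Hd.
  assert (Ea : (x1-y1)*a1+(x2-y2)*a2+(x3-y3)*a3 = 0) by lra.
  assert (Eb : (x1-y1)*b1+(x2-y2)*b2+(x3-y3)*b3 = 0) by lra.
  assert (Ec : (x1-y1)*c1+(x2-y2)*c2+(x3-y3)*c3 = 0) by lra.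
  set (u1 := x1 - y1) in *. set (u2 := x2 - y2) in *. set (u3 := x3 - y3) in *.
  set (A := u1*a1+u2*a2+u3*a3) in Ea. set (B := u1*b1+u2*b2+u3*b3) in Eb.
  set (C := u1*c1+u2*c2+u3*c3) in Ec.
  assert (F1 : D * u1 = A*(b2*c3-b3*c2) + B*(c2*a3-c3*a2) + C*(a2*b3-a3*b2)) by (unfold D, A, B, C; ring).
  assert (F2 : D * u2 = A*(b3*c1-b1*c3) + B*(c3*a1-c1*a3) + C*(a3*b1-a1*b3)) by (unfold D, A, B, C; ring).
  assert (F3 : D * u3 = A*(b1*c2-b2*c1) + B*(c1*a2-c2*a1) + C*(a1*b2-a2*b1)) by (unfold D, A, B, C; ring).
  rewrite Ea, Eb, Ec in F1, F2, F3.
  assert (u1 = 0) by (apply (Rmult_eq_reg_l D); [lra|auto]).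
  assert (u2 = 0) by (apply (Rmult_eq_reg_l D); [lra|auto]).
  assert (u3 = 0) by (apply (Rmult_eq_reg_l D); [lra|auto]).
  unfold u1, u2, u3 in *. f_equal; [f_equal|]; lra.
Qed.

Lemma gram d n nr v :
  dot (cross d n) v * dot (cross n nr) d =
  dot d d * (dot n n * dot v nr - dot n nr * dot v n)
  - dot d n * (dot n d * dot v nr - dot n nr * dot v d)
  + dot d nr * (dot n d * dot v n - dot n n * dot v d).
Proof. destruct d as [[? ?] ?], n as [[? ?] ?], nr as [[? ?] ?], v as [[? ?] ?]; simpl; ring. Qed.

Lemma dot_zero_eq x y : dot (vsub x y) (vsub x y) = 0 -> x = y.
Proof. destruct x as [[x1 x2] x3], y as [[y1 y2] y3]; simpl; intro H.
  pose proof (Rle_0_sqr (x1 - y1)); pose proof (Rle_0_sqr (x2 - y2)); pose proof (Rle_0_sqr (x3 - y3)).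
  unfold Rsqr in *.
  assert ((x1-y1)*(x1-y1) = 0) by nra. assert ((x2-y2)*(x2-y2) = 0) by nra. assert ((x3-y3)*(x3-y3) = 0) by nra.
  f_equal; [f_equal|]; nra. Qed.
Lemma dot_zero_opp x y : dot (vadd x y) (vadd x y) = 0 -> x = vopp y.
Proof. destruct x as [[x1 x2] x3], y as [[y1 y2] y3]; simpl; intro H.
  pose proof (Rle_0_sqr (x1 + y1)); pose proof (Rle_0_sqr (x2 + y2)); pose proof (Rle_0_sqr (x3 + y3)).
  unfold Rsqr in *.
  assert ((x1+y1)*(x1+y1) = 0) by nra. assert ((x2+y2)*(x2+y2) = 0) by nra. assert ((x3+y3)*(x3+y3) = 0) by nra.
  f_equal; [f_equal|]; nra. Qed.

Lemma sin_nz n nr al : dot n n = 1 -> dot nr nr = 1 -> n <> nr -> n <> vopp nr ->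
  cos al = dot n nr -> sin al <> 0.
Proof.
  intros Hn Hr H1 H2 Hc Hs. pose proof (sin2_cos2 al) as E. unfold Rsqr in E.
  rewrite Hs in E.
  assert (Hcc : dot n nr = 1 \/ dot n nr = -1) by nra.
  destruct Hcc as [Hc1|Hc1].
  - apply H1, dot_zero_eq. clear -Hn Hr Hc1.
    destruct n as [[? ?] ?], nr as [[? ?] ?]; simpl in *; lra.
  - apply H2, dot_zero_opp. clear -Hn Hr Hc1.
    destruct n as [[? ?] ?], nr as [[? ?] ?]; simpl in *; lra.
Qed.

Lemma half_tan al : - PI < al < PI -> tan (al / 2) * sin al = 1 - cos al.
Proof.
  intros [H1 H2]. assert (Hc : 0 < cos (al/2)) by (apply cos_gt_0; lra).
  replace al with (2 * (al/2)) at 2 3 by field.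
  rewrite sin_2a, cos_2a_sin. unfold tan. field. lra.
Qed.

Lemma edge_tan d n nr v al :
  dot d n = 0 -> dot d nr = 0 -> dot n n = 1 -> dot nr nr = 1 ->
  dot v n = 1 -> dot v nr = 1 -> n <> nr -> n <> vopp nr -> vnorm d <> 0 ->
  - PI < al < PI -> cos al = dot n nr ->
  sin al = dot (cross n nr) (vscal (/ vnorm d) d) ->
  dot (cross d n) v = vnorm d * tan (al / 2).
Proof.
  intros Hdn Hdr Hn Hr Hvn Hvr Ne1 Ne2 Hl Hal Hc Hs.
  assert (Hll : vnorm d * vnorm d = dot d d) by (unfold vnorm; apply sqrt_sqrt, dot_self_nonneg).
  assert (Hs' : sin al * vnorm d = dot (cross n nr) d).
  { rewrite Hs. replace (dot (cross n nr) (vscal (/ vnorm d) d)) with (/ vnorm d * dot (cross n nr) d)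
      by (destruct n as [[? ?] ?], nr as [[? ?] ?], d as [[? ?] ?]; simpl; ring). field; auto. }
  pose proof (gram d n nr v) as G. rewrite Hdn, Hdr, Hn, Hvn, Hvr, <- Hs', <- Hll, <- Hc in G.
  pose proof (sin_nz n nr al Hn Hr Ne1 Ne2 Hc) as Hsn.
  pose proof (half_tan al Hal) as T.
  apply (Rmult_eq_reg_r (sin al * vnorm d)); [|apply Rmult_integral_contrapositive; auto].
  replace (vnorm d * tan (al / 2) * (sin al * vnorm d)) with (vnorm d * vnorm d * (tan (al/2) * sin al)) by ring.
  rewrite T, G. ring.
Qed.

Lemma in_cyc {V : Type} (s : list V) i j : In (i, j) (cyc_edges s) -> In i s /\ In j s.
Proof.
  destruct s as [|x t]; unfold cyc_edges; [simpl; tauto|]. intro H. split.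
  - exact (in_combine_l _ _ _ _ H).
  - apply in_combine_r in H. apply in_app_or in H. simpl in *. tauto.
Qed.

Lemma sumR_ext {A} (g1 g2 : A -> R) l : (forall e, In e l -> g1 e = g2 e) -> sumR g1 l = sumR g2 l.
Proof. induction l; simpl; intros H; auto. unfold sumR in *; simpl. rewrite H by auto.
  rewrite IHl; auto. Qed.

Lemma sumR_plus {A} (g1 g2 : A -> R) l : sumR (fun e => g1 e + g2 e) l = sumR g1 l + sumR g2 l.
Proof. induction l; unfold sumR in *; simpl; [ring|]. rewrite IHl; ring. Qed.
Lemma sumR_scal {A} c (g : A -> R) l : sumR (fun e => c * g e) l = c * sumR g l.
Proof. induction l; unfold sumR in *; simpl; [ring|]. rewrite IHl; ring. Qed.
Lemma sumR_minus {A} (g1 g2 : A -> R) l : sumR (fun e => g1 e - g2 e) l = sumR g1 l - sumR g2 l.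
Proof. induction l; unfold sumR in *; simpl; [ring|]. rewrite IHl; ring. Qed.

Lemma sumR_fst {A B} (g : A -> R) (l1 : list A) (l2 : list B) : length l1 = length l2 ->
  sumR (fun e => g (fst e)) (combine l1 l2) = sumR g l1.
Proof. revert l2; induction l1; intros [|b l2]; simpl; intro H; try discriminate; auto.
  unfold sumR in *; simpl. rewrite IHl1; auto. Qed.
Lemma sumR_snd {A B} (g : B -> R) (l1 : list A) (l2 : list B) : length l1 = length l2 ->
  sumR (fun e => g (snd e)) (combine l1 l2) = sumR g l2.
Proof. revert l2; induction l1; intros [|b l2]; simpl; intro H; try discriminate; auto.
  unfold sumR in *; simpl. rewrite IHl1; auto. Qed.
Lemma sumR_app1 {A} (g : A -> R) l x : sumR g (l ++ [x]) = sumR g (x :: l).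
Proof. induction l; unfold sumR in *; simpl; [ring|]. rewrite IHl; simpl; ring. Qed.

Lemma telescope {V} (g : V -> R) (s : list V) :
  sumR (fun e => g (snd e) - g (fst e)) (cyc_edges s) = 0.
Proof.
  rewrite sumR_minus. destruct s as [|x t]; unfold cyc_edges; [unfold sumR; simpl; ring|].
  assert (HL : length (x :: t) = length (t ++ [x])) by (rewrite length_app; simpl; lia).
  rewrite (sumR_fst g _ _ HL), (sumR_snd g _ _ HL), sumR_app1. ring.
Qed.

Lemma is_derive_sumR {A} (G : A -> R -> R) (D : A -> R) l :
  (forall e, In e l -> is_derive (G e) 0 (D e)) ->
  is_derive (fun t => sumR (fun e => G e t) l) 0 (sumR D l).
Proof.
  induction l; intro H; unfold sumR in *; simpl.
  - auto_derive; auto; ring.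
  - apply (is_derive_plus (G a) (fun t => fold_right Rplus 0 (map (fun e => G e t) l))).
    + apply H; simpl; auto.
    + apply IHl; intros; apply H; simpl; auto.
Qed.

Lemma edge_deriv (p q p' q' m : vec) :
  is_derive (fun t => dot (cross (vadd p (vscal t q)) (vadd p' (vscal t q'))) m) 0
    (dot (cross q p') m + dot (cross p q') m).
Proof.
  destruct p as [[p1 p2] p3], q as [[q1 q2] q3], p' as [[r1 r2] r3], q' as [[s1 s2] s3], m as [[m1 m2] m3].
  simpl. auto_derive; auto. ring.
Qed.

Lemma edge_alg (fi fj wi wj n : vec) :
  dot (cross (vsub fj fi) n) wi + dot (cross (vsub fj fi) n) wj =
  (dot (cross wi fj) n + dot (cross fi wj) n) + (dot (cross wj fj) n - dot (cross wi fi) n).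
Proof.
  destruct fi as [[? ?] ?], fj as [[? ?] ?], wi as [[? ?] ?], wj as [[? ?] ?], n as [[? ?] ?]; simpl; ring.
Qed.

Theorem mainTheorem2
  (V F : Type) (bd : F -> list V)
  (f : V -> vec) (n : F -> vec) (h : F -> R)
  (alpha : V -> V -> R) (eps : R) (ft : R -> V -> vec)
  (Hsurf : closed_oriented bd)
  (Hunit : forall phi, vnorm (n phi) = 1)
  (Hplane : forall phi i, In i (bd phi) -> dot (f i) (n phi) = h phi)
  (Htri : forall i : V, exists a b c : F,
            a <> b /\ a <> c /\ b <> c /\
            (forall phi, In i (bd phi) <-> (phi = a \/ phi = b \/ phi = c)) /\
            lin_indep3 (n a) (n b) (n c))
  (Hlen : forall phi i j, In (i, j) (cyc_edges (bd phi)) ->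
            vnorm (vsub (f j) (f i)) <> 0)
  (Hadj : forall phi r i j, In (i, j) (cyc_edges (bd phi)) ->
            In (j, i) (cyc_edges (bd r)) ->
            n phi <> n r /\ n phi <> vopp (n r))
  (Halpha : forall phi r i j, In (i, j) (cyc_edges (bd phi)) ->
            In (j, i) (cyc_edges (bd r)) ->
            dihedral_angle (n phi) (n r) (f i) (f j) (alpha i j))
  (Heps : 0 < eps)
  (Hft : forall t, - eps < t < eps ->
            forall phi i, In i (bd phi) -> dot (ft t i) (n phi) = h phi + t) :
  forall phi : F,
    ex_derive (fun t => face_area (ft t) (n phi) (bd phi)) 0 /\
    mean_curv f alpha (bd phi) =
      / 2 * Derive (fun t => face_area (ft t) (n phi) (bd phi)) 0.
Proof.
  intros phi.
  set (t0 := eps / 2).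
  set (w := fun i => vscal (/ t0) (vsub (ft t0 i) (f i))).
  assert (Ht0 : - eps < t0 < eps) by (unfold t0; lra).
  assert (Hw : forall k i, In i (bd k) -> dot (w i) (n k) = 1).
  { intros k i Hi. unfold w. rewrite dot_vscal, dot_vsub, (Hft t0 Ht0 k i Hi), (Hplane k i Hi).
    field. unfold t0; lra. }
  assert (Hv : forall t i, - eps < t < eps -> ft t i = vadd (f i) (vscal t (w i))).
  { intros t i Ht. destruct (Htri i) as [a [b [c [_ [_ [_ [Hin Hind]]]]]]].
    assert (Ha : In i (bd a)) by (apply Hin; auto).
    assert (Hb : In i (bd b)) by (apply Hin; auto).
    assert (Hc : In i (bd c)) by (apply Hin; auto).
    apply (uniq3 (n a) (n b) (n c)); [apply lin_indep_det; auto | | |];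
      rewrite dot_vadd, dot_vscal, Hw, Hplane, Hft; auto; ring. }
  set (s := bd phi).
  set (D := / 2 * sumR (fun e => dot (cross (w (fst e)) (f (snd e))) (n phi)
                              + dot (cross (f (fst e)) (w (snd e))) (n phi)) (cyc_edges s)).
  assert (HD : is_derive (fun t => face_area (ft t) (n phi) s) 0 D).
  { apply (is_derive_ext_loc (fun t => face_area (fun i => vadd (f i) (vscal t (w i))) (n phi) s)).
    - exists (mkposreal eps Heps). intros y Hy.
      unfold ball in Hy; simpl in Hy; unfold AbsRing_ball, abs, minus, plus, opp in Hy; simpl in Hy.
      apply Rabs_def2 in Hy.
      unfold face_area. f_equal. apply sumR_ext. intros e _. rewrite !(Hv y) by lra. reflexivity.
    - unfold face_area, D. apply is_derive_scal.
      apply (is_derive_sumR (fun e t => dot (cross (vadd (f (fst e)) (vscal t (w (fst e))))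
                                                   (vadd (f (snd e)) (vscal t (w (snd e))))) (n phi))).
      intros; apply edge_deriv. }
  split.
  - exists D; exact HD.
  - assert (HDer : Derive (fun t => face_area (ft t) (n phi) s) 0 = D)
      by (apply is_derive_unique; exact HD).
    unfold s in *. rewrite HDer.
    unfold mean_curv, D.
    rewrite (sumR_ext _ (fun e => / 2 * (dot (cross (w (fst e)) (f (snd e))) (n phi)
                              + dot (cross (f (fst e)) (w (snd e))) (n phi))
        + / 2 * ((fun k => dot (cross (w k) (f k)) (n phi)) (snd e)
                - (fun k => dot (cross (w k) (f k)) (n phi)) (fst e)))).
    + pose proof (telescope (fun k => dot (cross (w k) (f k)) (n phi)) (bd phi)) as TT.
      cbv beta in TT. rewrite sumR_plus, !sumR_scal, TT. ring.
    + intros [i j] Hij. simpl.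
      destruct (Hsurf phi i j Hij) as [_ [r Hr]].
      destruct (in_cyc _ _ _ Hij) as [Hi Hj]; destruct (in_cyc _ _ _ Hr) as [Hj' Hi'].
      destruct (Hadj phi r i j Hij Hr) as [Ne1 Ne2].
      destruct (Halpha phi r i j Hij Hr) as [Hal [Hc Hs]].
      assert (Hd1 : dot (vsub (f j) (f i)) (n phi) = 0)
        by (rewrite dot_vsub, !Hplane by auto; ring).
      assert (Hd2 : dot (vsub (f j) (f i)) (n r) = 0)
        by (rewrite dot_vsub, !Hplane by auto; ring).
      pose proof (unit_dot _ (Hunit phi)) as U1. pose proof (unit_dot _ (Hunit r)) as U2.
      pose proof (edge_tan _ _ _ (w i) _ Hd1 Hd2 U1 U2 (Hw _ _ Hi) (Hw _ _ Hi') Ne1 Ne2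
                   (Hlen _ _ _ Hij) Hal Hc Hs) as E1.
      pose proof (edge_tan _ _ _ (w j) _ Hd1 Hd2 U1 U2 (Hw _ _ Hj) (Hw _ _ Hj') Ne1 Ne2
                   (Hlen _ _ _ Hij) Hal Hc Hs) as E2.
      pose proof (edge_alg (f i) (f j) (w i) (w j) (n phi)) as E3.
      lra.
Qed.
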